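(* Let $V$ be a real vector space, let $F$ be a geometric mean closed vector lattice, let $T\colon V\times V\to F$ be a vector semi-inner product, and let $u\in F^+$. Define $\|x\|^T_u:=T(x,x)\boxtimes u$ for $x\in V$. Then for all $x,y\in V$, \[ \|x+y\|^T_u\boxplus\|x-y\|^T_u=2^{1/2}\bigl(\|x\|^T_u\boxplus\|y\|^T_u\bigr). \]
   Context: All vector spaces are over $\mathbb{R}$ and all vector lattices are Archimedean; $F^+=\{x\in F:x\ge0\}$. A vector lattice $F$ is geometric mean closed if $\inf\{\theta u+\theta^{-1}v:\theta\in(0,\infty)\}$ exists in $F$ for all $u,v\in F^+$, and then $u\boxtimes v:=2^{-1}\inf\{\theta u+\theta^{-1}v:\theta\in(0,\infty)\}$. For $u,v\in F$, $u\boxplus v:=\sup\{(\cos\theta)u+(\sin\theta)v:\theta\in[0,2\pi]\}$; this supremum exists in every geometric mean closed vector lattice. A map $T\colon V\times V\to F$ is a vector semi-inner product if it is bilinear, symmetric ($T(x,y)=T(y,x)$), and satisfies $T(x,x)\ge 0$ for all $x\in V$. *)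

(* Defs.v *)
From HB Require Import structures.
From mathcomp Require Import all_boot all_order all_algebra.
From mathcomp Require Import all_classical all_reals all_analysis.
Set Implicit Arguments. Unset Strict Implicit. Unset Printing Implicit Defensive.
Import Order.TTheory GRing.Theory Num.Theory.
Local Open Scope classical_set_scope.
Local Open Scope ring_scope.

Section VectorLattice.
Variables (R : realType) (F : lmodType R) (le : F -> F -> Prop).

Definition is_lub (S : set F) (s : F) : Prop :=
  (forall x, S x -> le x s) /\ (forall b, (forall x, S x -> le x b) -> le s b).

Definition is_glb (S : set F) (s : F) : Prop :=
  (forall x, S x -> le s x) /\ (forall b, (forall x, S x -> le b x) -> le b s).

Record vector_lattice : Prop := {
  vl_refl : forall x, le x x;
  vl_antisym : forall x y, le x y -> le y x -> x = y;
  vl_trans : forall x y z, le x y -> le y z -> le x z;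
  vl_add : forall x y z, le x y -> le (x + z) (y + z);
  vl_scale : forall (a : R) x y, 0 <= a -> le x y -> le (a *: x) (a *: y);
  vl_sup : forall x y, exists s, is_lub [set x; y] s;
  vl_archimedean : forall x y, le 0 x ->
     (forall n : nat, le (n%:R *: x) y) -> x = 0 }.

Definition gm_set (u v : F) : set F :=
  [set t | exists theta : R, 0 < theta /\ t = theta *: u + theta^-1 *: v].

Definition geometric_mean_closed : Prop :=
  forall u v, le 0 u -> le 0 v -> exists z, is_glb (gm_set u v) z.

Definition boxtimes (u v : F) : F := 2^-1 *: xget 0 (is_glb (gm_set u v)).

Definition bp_set (u v : F) : set F :=
  [set t | exists theta : R, 0 <= theta <= 2 * pi /\
           t = cos theta *: u + sin theta *: v].

Definition boxplus (u v : F) : F := xget 0 (is_lub (bp_set u v)).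

End VectorLattice.

Definition vector_semi_inner_product (R : realType) (V F : lmodType R)
  (le : F -> F -> Prop) (T : V -> V -> F) : Prop :=
  (forall (a : R) x y z, T (a *: x + y) z = a *: T x z + T y z) /\
  (forall (a : R) x y z, T x (a *: y + z) = a *: T x y + T x z) /\
  (forall x y, T x y = T y x) /\
  (forall x, le 0 (T x x)).

Definition Tnorm (R : realType) (V F : lmodType R) (le : F -> F -> Prop)
  (T : V -> V -> F) (u : F) (x : V) : F := boxtimes le (T x x) u.

(* Main.v *)
Require Import Defs.
From HB Require Import structures.
From mathcomp Require Import all_boot all_order all_algebra.
From mathcomp Require Import all_classical all_reals all_analysis.
From mathcomp Require Import ring lra.
Import Order.TTheory GRing.Theory Num.Theory.
Local Open Scope ring_scope.
Local Open Scope classical_set_scope.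
Set Implicit Arguments. Unset Strict Implicit. Unset Printing Implicit Defensive.

Section VL.
Variables (R : realType) (F : lmodType R) (le : F -> F -> Prop).
Hypothesis hF : vector_lattice le.

Lemma leR x : le x x. Proof. by case: hF. Qed.
Lemma leT x y z : le x y -> le y z -> le x z. Proof. by case: hF => _ _ h *; apply: h; eauto. Qed.
Lemma leA x y : le x y -> le y x -> x = y. Proof. by case: hF => _ h *; apply: h. Qed.

Lemma le_sub x y : le x y <-> le 0 (y - x).
Proof.
split=> h.
  by have := vl_add hF (- x) h; rewrite subrr.
by have := vl_add hF x h; rewrite add0r subrK.
Qed.

Lemma subge0 x y : le 0 (y - x) -> le x y.
Proof. exact: (proj2 (le_sub x y)). Qed.
Lemma ge0sub x y : le x y -> le 0 (y - x).
Proof. exact: (proj1 (le_sub x y)). Qed.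

Lemma le0D x y : le 0 x -> le 0 y -> le 0 (x + y).
Proof.
move=> hx hy; apply: leT hx _.
by have := vl_add hF x hy; rewrite add0r addrC.
Qed.

Lemma leD x y z w : le x y -> le z w -> le (x + z) (y + w).
Proof.
move=> /le_sub h1 /le_sub h2; apply/le_sub.
have -> : y + w - (x + z) = (y - x) + (w - z) by rewrite opprD addrACA.
exact: le0D.
Qed.

Lemma le0Z k x : 0 <= k -> le 0 x -> le 0 (k *: x).
Proof. by move=> hk hx; have := @vl_scale _ _ _ hF k 0 x hk hx; rewrite scaler0. Qed.

Lemma leZ k x y : 0 <= k -> le x y -> le (k *: x) (k *: y).
Proof. by move=> hk h; exact: (@vl_scale _ _ _ hF k x y hk h). Qed.

Lemma leZl k1 k2 x : k1 <= k2 -> le 0 x -> le (k1 *: x) (k2 *: x).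
Proof.
move=> hk hx; apply/le_sub; rewrite -scalerBl; apply: le0Z => //.
by rewrite subr_ge0.
Qed.

Lemma leN x y : le x y -> le (- y) (- x).
Proof. by move=> /le_sub h; apply/le_sub; rewrite opprK addrC. Qed.

Lemma leBl x y z : le (x - z) y <-> le x (y + z).
Proof.
split=> /le_sub h; apply/le_sub.
  by move: h; rewrite opprB addrA.
by rewrite opprB addrA.
Qed.

Lemma glb_unique S x y : is_glb le S x -> is_glb le S y -> x = y.
Proof. move=> [h1 h2] [h3 h4]; apply: leA; [exact: h4|exact: h2]. Qed.

Lemma lub_unique S x y : is_lub le S x -> is_lub le S y -> x = y.
Proof. move=> [h1 h2] [h3 h4]; apply: leA; [exact: h2|exact: h4]. Qed.

Definition join (x y : F) : F := xget 0 (is_lub le [set x; y]).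

Lemma join_spec x y : is_lub le [set x; y] (join x y).
Proof. by apply: xgetPex; exact: vl_sup hF x y. Qed.

Lemma joinl x y : le x (join x y).
Proof. by case: (join_spec x y) => h _; apply: h; left. Qed.
Lemma joinr x y : le y (join x y).
Proof. by case: (join_spec x y) => h _; apply: h; right. Qed.
Lemma join_least x y z : le x z -> le y z -> le (join x y) z.
Proof. by case: (join_spec x y) => _ h hx hy; apply: h => w [->|->]. Qed.

Definition meet x y := x + y - join x y.

Lemma zt1 (x y j : F) : x - (x + y - j) = j - y.
Proof. by rewrite opprB opprD addrCA addNKr. Qed.
Lemma zt2 (x y j : F) : y - (x + y - j) = j - x.
Proof. by rewrite (addrC x) zt1. Qed.

Lemma le_addB a b c : le (a + b) c <-> le a (c - b).
Proof.
split=> /le_sub h; apply/le_sub.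
  by move: h; rewrite opprD addrA addrAC.
by rewrite opprD addrA addrAC.
Qed.

Lemma meetl x y : le (meet x y) x.
Proof. by apply: subge0; rewrite /meet zt1; apply: ge0sub; exact: joinr. Qed.
Lemma meetr x y : le (meet x y) y.
Proof. by apply: subge0; rewrite /meet zt2; apply: ge0sub; exact: joinl. Qed.

Lemma meet_greatest x y z : le z x -> le z y -> le z (meet x y).
Proof.
move=> hx hy; rewrite /meet; apply/le_addB; rewrite addrC; apply/le_addB.
apply: join_least.
  apply: subge0; have -> : x + y - z - x = y - z by rewrite addrAC [x + y]addrC addrK.
  exact: ge0sub.
apply: subge0; have -> : x + y - z - y = x - z by rewrite addrAC addrK.
exact: ge0sub.
Qed.

Lemma distr_glb S X x z : is_glb le S X ->
  (forall s, S s -> le z (join x s)) -> le z (join x X).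
Proof.
move=> [hlb hgr] hz.
have key : le (z + meet x X - x) X.
  apply: hgr => s Ss.
  have e : s = join x s + meet x s - x.
    by rewrite /meet (addrC (join x s)) subrK addrC addKr.
  rewrite [in X in le _ X]e.
  apply: leD; last exact: leR.
  apply: leD; first exact: hz.
  apply: meet_greatest; first exact: meetl.
  exact: leT (meetr x X) (hlb s Ss).
have -> : join x X = X + x - meet x X.
  by rewrite /meet (addrC X) opprB addrCA subrr addr0.
by apply/le_addB; apply/leBl.
Qed.

End VL.

Section G.
Variables (R : realType) (F : lmodType R) (le : F -> F -> Prop).
Hypothesis hF : vector_lattice le.

Lemma glb_scale_bound S X (c : R) w : is_glb le S X -> 0 <= c -> (exists s, S s) ->
  (forall s, S s -> le w (c *: s)) -> le w (c *: X).
Proof.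
move=> [hlb hgr] hc [s0 Ss0] hw.
case: (eqVneq c 0) => [c0|c0].
  by move: (hw _ Ss0); rewrite c0 !scale0r.
have cp : 0 < c by rewrite lt_def c0.
have -> : w = c *: (c^-1 *: w) by rewrite scalerA divff // scale1r.
apply: (leZ hF (ltW cp)); apply: hgr => s Ss.
have -> : s = c^-1 *: (c *: s) by rewrite scalerA mulVf // scale1r.
by apply: (leZ hF); [rewrite invr_ge0 ltW|apply: hw].
Qed.

Lemma glb_lin S T X Y (c d : R) : is_glb le S X -> is_glb le T Y -> 0 <= c -> 0 <= d ->
  (exists s, S s) -> (exists t, T t) ->
  is_glb le [set w | exists s t, S s /\ T t /\ w = c *: s + d *: t] (c *: X + d *: Y).
Proof.
move=> hX hY hc hd hS hT; split.
  move=> w [s [t [Ss [Tt ->]]]]; apply: (leD hF); apply: (leZ hF) => //.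
    exact: hX.1.
  exact: hY.1.
move=> z hz.
have h1 : forall t, T t -> le (z - c *: X) (d *: t).
  move=> t Tt.
  have : le (z - d *: t) (c *: X).
    apply: (glb_scale_bound hX) => // s Ss.
    by apply/(leBl hF); apply: hz; exists s, t.
  by move/(leBl hF); rewrite addrC => /(leBl hF).
have := glb_scale_bound hY hd hT h1.
by move/(leBl hF); rewrite addrC.
Qed.

Variables (u : F) (hu : le 0 u).
Hypothesis hgm : geometric_mean_closed le.

Definition G (c : F) : F := xget 0 (is_glb le (gm_set c u)).

Lemma G_spec c : le 0 c -> is_glb le (gm_set c u) (G c).
Proof. by move=> hc; apply: xgetPex; apply: hgm. Qed.

Lemma gm_ne c : exists s, gm_set c u s.
Proof. by exists (1 *: c + 1^-1 *: u), 1. Qed.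

Lemma G_le c t : le 0 c -> 0 < t -> le (G c) (t *: c + t^-1 *: u).
Proof. by move=> hc ht; apply: (G_spec hc).1; exists t. Qed.

Lemma G_greatest c z : le 0 c -> (forall t, 0 < t -> le z (t *: c + t^-1 *: u)) -> le z (G c).
Proof. by move=> hc h; apply: (G_spec hc).2 => w [t [ht ->]]; apply: h. Qed.

Lemma G_ge0 c : le 0 c -> le 0 (G c).
Proof.
move=> hc; apply: G_greatest => // t ht; apply: (le0D hF); apply: (le0Z hF) => //.
  exact: ltW. 
by rewrite invr_ge0 ltW.
Qed.

Lemma G_scale c (k : R) : le 0 c -> 0 < k -> G (k ^+ 2 *: c) = k *: G c.
Proof.
move=> hc hk.
have hkc : le 0 (k ^+ 2 *: c) by apply: (le0Z hF) => //; rewrite exprn_ge0 // ltW.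
have k0 : k != 0 by rewrite gt_eqF.
apply: (glb_unique hF (G_spec hkc)); split.
  move=> w [t [ht ->]].
  have -> : t *: (k ^+ 2 *: c) + t^-1 *: u = k *: ((t * k) *: c + (t * k)^-1 *: u).
    rewrite scalerDr !scalerA; congr (_ *: _ + _ *: _).
      by rewrite expr2; ring.
    by rewrite invfM mulrCA divff // mulr1.
  apply: (leZ hF (ltW hk)); apply: G_le => //; exact: mulr_gt0.
move=> z hz.
have -> : z = k *: (k^-1 *: z) by rewrite scalerA divff // scale1r.
apply: (leZ hF (ltW hk)); apply: G_greatest => // t ht.
have -> : t *: c + t^-1 *: u = k^-1 *: ((t / k) *: (k ^+ 2 *: c) + (t / k)^-1 *: u).
  rewrite scalerDr !scalerA; congr (_ *: _ + _ *: _).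
    by rewrite expr2; field.
  by rewrite invfM invrK mulrCA mulVf // mulr1.
apply: (leZ hF); first by rewrite invr_ge0 ltW.
apply: hz; exists (t / k); split => //; exact: divr_gt0.
Qed.

End G.

Lemma divt (P : nat -> bool) N : P 0%N -> ~~ P N -> exists j, (j < N)%N /\ P j /\ ~~ P j.+1.
Proof.
elim: N => [|N IH] h0 hN; first by rewrite h0 in hN.
case hPN: (P N).
  by exists N; split => //; split.
have [j [hj [hPj hPj1]]] := IH h0 (negbT hPN).
by exists j; split => //; apply: ltnW.
Qed.

Lemma cs2 (R : realFieldType) (l m c1 c2 s1 s2 K : R) : 0 <= l -> 0 <= m -> l + m = 1 ->
  0 <= c1 -> 0 <= c2 -> 0 < s1 -> 0 < s2 -> 0 <= K -> K <= c1 ^+ 2 -> K <= c2 ^+ 2 ->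
  K <= (l * c1 / s1 + m * c2 / s2) * (l * c1 * s1 + m * c2 * s2).
Proof.
move=> hl hm hlm hc1 hc2 hs1 hs2 hK h1 h2.
have e : (l * c1 / s1 + m * c2 / s2) * (l * c1 * s1 + m * c2 * s2) =
   l^+2 * c1^+2 + m^+2 * c2^+2 + l * m * c1 * c2 * (s1 / s2 + s2 / s1).
  field. by rewrite !gt_eqF.
have hq : 2 <= s1 / s2 + s2 / s1.
  have -> : s1 / s2 + s2 / s1 = 2 + (s1 - s2)^+2 / (s1 * s2).
    field. by rewrite !gt_eqF.
  rewrite lerDl; apply: divr_ge0; [exact: sqr_ge0|exact: ltW (mulr_gt0 hs1 hs2)].
have hcc : K <= c1 * c2.
  have hK2 : K ^+ 2 <= (c1 * c2) ^+ 2 by rewrite exprMn; nra.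
  by rewrite -(ler_pXn2r (_ : 0 < 2)%N) // ?nnegrE //; apply: mulr_ge0.
have hlmc : 0 <= l * m * c1 * c2 by do 3 (apply: mulr_ge0 => //).
rewrite e.
have : l * m * c1 * c2 * 2 <= l * m * c1 * c2 * (s1 / s2 + s2 / s1) by apply: ler_wpM2l.
have t1 : l ^+ 2 * K <= l ^+ 2 * c1 ^+ 2 by apply: ler_wpM2l => //; exact: sqr_ge0.
have t2 : m ^+ 2 * K <= m ^+ 2 * c2 ^+ 2 by apply: ler_wpM2l => //; exact: sqr_ge0.
have t3 : l * m * K <= l * m * (c1 * c2) by apply: ler_wpM2l => //; exact: mulr_ge0.
have eK : K = l ^+ 2 * K + m ^+ 2 * K + 2 * (l * m * K).
  have e2 : (l + m) ^+ 2 = 1 by rewrite hlm expr1n.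
  transitivity (K * (l + m) ^+ 2); first by rewrite e2 mulr1.
  ring.
move=> h; rewrite eK; rewrite -!mulrA in h t3 *; lra.
Qed.

Lemma pos_comb (R : realFieldType) (c q s t : R) : 0 <= c -> 0 <= q -> c ^+ 2 + q ^+ 2 = 1 ->
  0 < s -> 0 < t -> 0 < c * s + q * t.
Proof.
move=> hc hq h1 hs ht.
case: (eqVneq c 0) => [c0|c0].
  move: h1; rewrite c0 expr0n /= add0r => hq1.
  have : q != 0 by apply/eqP => q0; move: hq1; rewrite q0 expr0n /= => /eqP; rewrite eq_sym oner_eq0.
  move=> q0; rewrite mul0r add0r; apply: mulr_gt0 => //; rewrite lt_def q0 //.
have : 0 < c * s by apply: mulr_gt0 => //; rewrite lt_def c0.
have : 0 <= q * t by apply: mulr_ge0 => //; exact: ltW.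
lra.
Qed.

Lemma pos_mix (R : realFieldType) (l m e1 e2 : R) : 0 <= l -> 0 <= m -> l + m = 1 -> 0 < e1 -> 0 < e2 ->
  0 < l * e1 + m * e2.
Proof.
move=> hl hm hlm h1 h2.
case: (eqVneq l 0) => [l0|l0].
  have -> : m = 1 by rewrite -hlm l0 add0r.
  by rewrite l0 mul0r add0r mul1r.
have : 0 < l * e1 by apply: mulr_gt0 => //; rewrite lt_def l0.
have : 0 <= m * e2 by apply: mulr_ge0 => //; exact: ltW.
lra.
Qed.

Section Grid.
Variable R : realType.
Definition cc (N j : nat) : R := Num.sqrt (1 - j%:R / N%:R).
Definition sn (N j : nat) : R := Num.sqrt (j%:R / N%:R).

Lemma frac_ge0 (N j : nat) : 0 <= j%:R / N%:R :> R.
Proof. by apply: divr_ge0; apply: ler0n. Qed.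

Lemma frac_le1 (N j : nat) : (0 < N)%N -> (j <= N)%N -> j%:R / N%:R <= 1 :> R.
Proof. by move=> N0 hj; rewrite ler_pdivrMr ?ltr0n // mul1r ler_nat. Qed.

Lemma cc_ge0 N j : 0 <= cc N j. Proof. exact: sqrtr_ge0. Qed.
Lemma sn_ge0 N j : 0 <= sn N j. Proof. exact: sqrtr_ge0. Qed.

Lemma cc_sq N j : (0 < N)%N -> (j <= N)%N -> cc N j ^+ 2 = 1 - j%:R / N%:R.
Proof. by move=> N0 hj; rewrite sqr_sqrtr // subr_ge0 frac_le1. Qed.
Lemma sn_sq N j : sn N j ^+ 2 = j%:R / N%:R.
Proof. by rewrite sqr_sqrtr // frac_ge0. Qed.

Lemma cc0 N : cc N 0 = 1. Proof. by rewrite /cc mul0r subr0 sqrtr1. Qed.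
Lemma sn0 N : sn N 0 = 0. Proof. by rewrite /sn mul0r sqrtr0. Qed.
Lemma ccN N : (0 < N)%N -> cc N N = 0.
Proof. by move=> N0; rewrite /cc divff ?subrr ?sqrtr0 // pnatr_eq0 -lt0n. Qed.
Lemma snN N : (0 < N)%N -> sn N N = 1.
Proof. by move=> N0; rewrite /sn divff ?sqrtr1 // pnatr_eq0 -lt0n. Qed.
End Grid.

Section Key.
Variables (R : realType) (F : lmodType R) (le : F -> F -> Prop).
Hypothesis hF : vector_lattice le.
Variables (u : F) (hu : le 0 u).
Hypothesis hgm : geometric_mean_closed le.
Variables (a b : F) (ha : le 0 a) (hb : le 0 b).

Local Notation G := (G le u).

Definition lin (p q r : R) : F := p *: a + q *: b + r *: u.

Lemma lin_ge0 p q r : 0 <= p -> 0 <= q -> 0 <= r -> le 0 (lin p q r).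
Proof.
move=> hp hq hr; apply: (le0D hF); first apply: (le0D hF).
all: by apply: (le0Z hF).
Qed.

Lemma linB p q r p' q' r' : lin p q r - lin p' q' r' = lin (p - p') (q - q') (r - r').
Proof.
by rewrite /lin !scalerBl opprD opprD addrACA (addrACA (p *: a)).
Qed.

Lemma linD p q r p' q' r' : lin p q r + lin p' q' r' = lin (p + p') (q + q') (r + r').
Proof.
by rewrite /lin !scalerDl addrACA (addrACA (p *: a)).
Qed.

Lemma linZ k p q r : k *: lin p q r = lin (k * p) (k * q) (k * r).
Proof. by rewrite /lin !scalerDr !scalerA. Qed.

Lemma lin_le p q r p' q' r' : p <= p' -> q <= q' -> r <= r' -> le (lin p q r) (lin p' q' r').
Proof.
move=> h1 h2 h3; apply: (subge0 hF); rewrite linB; apply: lin_ge0; by rewrite subr_ge0.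
Qed.

Lemma linX c d s t : c *: (s *: a + s^-1 *: u) + d *: (t *: b + t^-1 *: u) =
  lin (c * s) (d * t) (c / s + d / t).
Proof. by rewrite /lin !scalerDr !scalerA scalerDl addrACA. Qed.

Lemma lin_gm t : t *: (a + b) + t^-1 *: u = lin t t t^-1.
Proof. by rewrite /lin scalerDr. Qed.

Lemma hab : le 0 (a + b). Proof. exact: le0D. Qed.

Lemma bound1 (x : F) c r : le 0 x -> 0 <= c -> 0 < r -> le (c *: G x) (r *: x + (c ^+ 2 / r) *: u).
Proof.
move=> hx hc hr.
case: (eqVneq c 0) => [->|c0].
  rewrite scale0r; apply: (le0D hF); apply: (le0Z hF) => //; first exact: ltW.
  by rewrite expr0n /= mul0r.
have cp : 0 < c by rewrite lt_def c0.
have := G_le hu hgm hx (divr_gt0 hr cp) => /(leZ hF (ltW cp)).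
rewrite scalerDr !scalerA; congr (le _ (_ *: _ + _ *: _)).
  by field; rewrite gt_eqF.
by rewrite invf_div expr2; field; rewrite gt_eqF.
Qed.

Lemma UB c d : 0 <= c -> 0 <= d -> c ^+ 2 + d ^+ 2 <= 1 ->
  le (c *: G a + d *: G b) (G (a + b)).
Proof.
move=> hc hd h1; apply: (G_greatest hu hgm hab) => r hr.
apply: (leT hF); first exact: (leD hF (bound1 ha hc hr) (bound1 hb hd hr)).
rewrite lin_gm.
have -> : r *: a + c ^+ 2 / r *: u + (r *: b + d ^+ 2 / r *: u) = lin r r ((c ^+ 2 + d ^+ 2) / r).
  by rewrite /lin mulrDl scalerDl addrACA.
apply: lin_le => //.
apply: (@le_trans _ _ (1 / r)); last by rewrite mul1r.
by apply: ler_wpM2r => //; rewrite invr_ge0 ltW.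
Qed.


Definition Sset (c d : R) : set F :=
  [set w | exists s t, gm_set a u s /\ gm_set b u t /\ w = c *: s + d *: t].
Definition Xf (c d s t : R) : F := c *: (s *: a + s^-1 *: u) + d *: (t *: b + t^-1 *: u).

Lemma comb N y : (0 < N)%N ->
  (forall j, (j <= N)%N -> exists2 x, Sset (cc R N j) (sn R N j) x & le x y) ->
  le ((1 - N%:R^-1) *: G (a + b)) y.
Proof.
move=> N0 hy.
have hN : (0:R) < N%:R by rewrite ltr0n.
have hf : forall j, exists st : R * R, (j <= N)%N ->
    0 < st.1 /\ 0 < st.2 /\ le (Xf (cc R N j) (sn R N j) st.1 st.2) y.
  move=> j; case: (leqP j N) => hj; last by exists (1,1).
  have [x [s [t [[th1 [h1 ->]] [[th2 [h2 ->]] ->]]]] hxy] := hy j hj.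
  by exists (th1, th2) => _.
have [f hf'] := choice hf.
pose s j := (f j).1. pose t j := (f j).2.
pose D j := cc R N j * s j - sn R N j * t j.
have hP0 : 0 <= D 0%N.
  have [hs [ht _]] := hf' 0%N (leq0n N).
  by rewrite /D cc0 sn0 mul1r mul0r subr0 ltW.
have hPN : ~~ (0 <= D N).
  have [hs [ht _]] := hf' N (leqnn N).
  by rewrite /D ccN // snN // mul0r mul1r sub0r -ltNge oppr_lt0.
have [j [hjN [hD1 hD2]]] := @divt (fun j => 0 <= D j) N hP0 hPN.
have [hs1 [ht1 hx1]] := hf' j (ltnW hjN).
have [hs2 [ht2 hx2]] := hf' j.+1 hjN.
move: hD2; rewrite -ltNge => hD2.
move: hD1 hD2 hs1 ht1 hx1 hs2 ht2 hx2.
rewrite /D /s /t.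
set c1 := cc R N j; set c2 := cc R N j.+1; set q1 := sn R N j; set q2 := sn R N j.+1.
set s1 := (f j).1; set t1 := (f j).2; set s2 := (f j.+1).1; set t2 := (f j.+1).2.
move=> hD1 hD2 hs1 ht1 hx1 hs2 ht2 hx2.
set D1 := c1 * s1 - q1 * t1 in hD1; set D2 := c2 * s2 - q2 * t2 in hD2.
have hden : 0 < D1 - D2 by rewrite subr_gt0; exact: (lt_le_trans hD2).
pose l := - D2 / (D1 - D2); pose m := D1 / (D1 - D2).
have hl : 0 <= l by apply: divr_ge0; [rewrite oppr_ge0 ltW|exact: ltW].
have hm : 0 <= m by apply: divr_ge0; [|exact: ltW].
have hlm : l + m = 1 by rewrite /l /m; field; rewrite gt_eqF.
pose A := l * c1 * s1 + m * c2 * s2.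
pose B := l * q1 * t1 + m * q2 * t2.
pose Ga := l * c1 / s1 + m * c2 / s2.
pose Gb := l * q1 / t1 + m * q2 / t2.
have hAB : A = B.
  apply/eqP; rewrite -subr_eq0.
  have -> : A - B = l * D1 + m * D2 by rewrite /A /B /D1 /D2; ring.
  by rewrite /l /m; apply/eqP; field; rewrite gt_eqF.
have hc1 : 0 <= c1 := cc_ge0 _ _ _.
have hc2 : 0 <= c2 := cc_ge0 _ _ _.
have hq1 : 0 <= q1 := sn_ge0 _ _ _.
have hq2 : 0 <= q2 := sn_ge0 _ _ _.
have hjN' : (j <= N)%N := ltnW hjN.
have hc1s : c1 ^+ 2 = 1 - j%:R / N%:R := cc_sq _ N0 hjN'.
have hc2s : c2 ^+ 2 = 1 - j.+1%:R / N%:R := cc_sq _ N0 hjN.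
have hq1s : q1 ^+ 2 = j%:R / N%:R := sn_sq _ _ _.
have hq2s : q2 ^+ 2 = j.+1%:R / N%:R := sn_sq _ _ _.
have hK1 : 1 - j.+1%:R / N%:R <= Ga * A.
  apply: cs2 => //; last by rewrite hc2s.
    by rewrite subr_ge0 frac_le1.
  rewrite hc1s lerD2l lerN2; apply: ler_wpM2r; first by rewrite invr_ge0 ler0n.
  by rewrite ler_nat.
have hK2 : j%:R / N%:R <= Gb * B.
  apply: cs2 => //; rewrite ?hq1s ?hq2s ?frac_ge0 //.
  apply: ler_wpM2r; first by rewrite invr_ge0 ler0n.
  by rewrite ler_nat.
have hA : 0 < A.
  have e1 : 0 < c1 * s1 + q1 * t1 by apply: pos_comb => //; rewrite hc1s hq1s subrK.
  have e2 : 0 < c2 * s2 + q2 * t2 by apply: pos_comb => //; rewrite hc2s hq2s subrK.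
  have := pos_mix hl hm hlm e1 e2.
  have -> : l * (c1 * s1 + q1 * t1) + m * (c2 * s2 + q2 * t2) = A + B by rewrite /A /B; ring.
  rewrite -hAB; lra.
have hK : 1 - N%:R^-1 <= (Ga + Gb) * A.
  have -> : 1 - N%:R^-1 = (1 - j.+1%:R / N%:R) + j%:R / N%:R :> R.
    by rewrite -[j.+1]addn1 natrD; field; rewrite gt_eqF.
  rewrite mulrDl {2}hAB; exact: lerD.
have hy' : le (lin A B (Ga + Gb)) y.
  have h := leD hF (leZ hF hl hx1) (leZ hF hm hx2).
  rewrite -scalerDl hlm scale1r in h.
  suff -> : lin A B (Ga + Gb) = l *: Xf c1 q1 s1 t1 + m *: Xf c2 q2 s2 t2 by [].
  rewrite /Xf !linX !linZ linD /A /B /Ga /Gb; congr lin; ring.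
apply: (leT hF) hy'.
have hK0 : 0 <= 1 - N%:R^-1 :> R.
  by rewrite subr_ge0 invf_le1 // ler1n.
apply: (leT hF); first exact: (leZ hF hK0 (G_le hu hgm hab hA)).
rewrite lin_gm linZ; apply: lin_le.
- have : 0 <= N%:R^-1 * A by apply: mulr_ge0; [rewrite invr_ge0 ler0n|exact: ltW].
  nra.
- have : 0 <= N%:R^-1 * A by apply: mulr_ge0; [rewrite invr_ge0 ler0n|exact: ltW].
  rewrite -hAB; nra.
- by rewrite ler_pdivrMr.
Qed.

End Key.

Section MD.
Variables (R : realType) (F : lmodType R) (le : F -> F -> Prop).
Hypothesis hF : vector_lattice le.

Lemma multi_distr (S : nat -> set F) (H : nat -> F) W k :
  (forall j, is_glb le (S j) (H j)) -> (forall j, (j < k)%N -> le (H j) W) ->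
  forall z e, (forall y, (forall j, (j < k)%N -> exists2 x, S j x & le x y) -> le e y -> le z y) ->
  le e W -> le z W.
Proof.
move=> hS; elim: k => [|k IH] hW z e hz heW.
  by apply: hz => // j.
apply: (IH _ z (join le e (H k))).
- by move=> j hj; apply: hW; rewrite ltnS ltnW.
- move=> y hy hey.
  have he : le e y := leT hF (joinl hF e (H k)) hey.
  have hH : le (H k) y := leT hF (joinr hF _ _) hey.
  apply: (leT hF) (join_least hF (leR hF y) hH).
  apply: (distr_glb hF (hS k)) => s Ss.
  apply: hz.
  + move=> i hi; case hik: (i < k)%N.
      have [x Sx hx] := hy i hik; exists x => //. apply: (leT hF hx). exact: joinl.
    have -> : i = k by apply/eqP; rewrite eqn_leq -ltnS hi leqNgt hik.
    by exists s => //; exact: joinr.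
  + apply: (leT hF he). exact: joinl.
- apply: (join_least hF heW). exact: hW.
Qed.

End MD.

Section Key2.
Variables (R : realType) (F : lmodType R) (le : F -> F -> Prop).
Hypothesis hF : vector_lattice le.
Variables (u : F) (hu : le 0 u).
Hypothesis hgm : geometric_mean_closed le.
Variables (a b : F) (ha : le 0 a) (hb : le 0 b).

Local Notation G := (G le u).

Lemma HD W : (forall p, 0 <= p <= 1 -> le (Num.sqrt (1 - p) *: G a + Num.sqrt p *: G b) W) ->
  le (G (a + b)) W.
Proof.
move=> hW.
have main : forall N, (0 < N)%N -> le ((1 - N%:R^-1) *: G (a + b)) W.
  move=> N N0.
  pose S j := Sset u a b (cc R N j) (sn R N j).
  pose H j := cc R N j *: G a + sn R N j *: G b.
  have hS : forall j, is_glb le (S j) (H j).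
    move=> j; apply: (glb_lin hF (G_spec hu hgm ha) (G_spec hu hgm hb)).
    - exact: cc_ge0.
    - exact: sn_ge0.
    - exact: gm_ne.
    - exact: gm_ne.
  have hWj : forall j, (j <= N)%N -> le (H j) W.
    move=> j hj; apply: hW; rewrite frac_ge0 /=; exact: frac_le1.
  apply: (@multi_distr R F le hF S H W N.+1 hS _ _ (H 0%N)).
  - by move=> j hj; apply: hWj; rewrite -ltnS.
  - move=> y hy _; apply: (comb hF hu hgm ha hb) => // j hj; apply: hy; rewrite ltnS.
  - exact: hWj.
have hG0 : le 0 (G (a + b)) := G_ge0 hF hu hgm (le0D hF ha hb).
pose d := G (a + b) - W.
pose x := join le d 0.
have hx0 : le 0 x := joinr hF d 0.
have hn : forall n : nat, le (n%:R *: x) (G (a + b)).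
  case=> [|n]; first by rewrite scale0r.
  have N0 : (0 < n.+1)%N by [].
  have hNr : (0 : R) < n.+1%:R by rewrite ltr0n.
  have h := main _ N0.
  have hd : le d (n.+1%:R^-1 *: G (a + b)).
    apply: (subge0 hF).
    have -> : n.+1%:R^-1 *: G (a + b) - d = W - (1 - n.+1%:R^-1) *: G (a + b).
      by rewrite /d scalerBl scale1r !opprB addrCA.
    exact: (ge0sub hF).
  have hx : le x (n.+1%:R^-1 *: G (a + b)).
    apply: (join_least hF hd); apply: (le0Z hF); [by rewrite invr_ge0 ler0n|exact: hG0].
  have := leZ hF (ltW hNr) hx.
  by rewrite scalerA divff ?scale1r // gt_eqF.
have x0 : x = 0 := @vl_archimedean _ _ _ hF x (G (a + b)) hx0 hn.
have : le d 0 by rewrite -x0; exact: joinl.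
move/(ge0sub hF); rewrite sub0r /d opprB => h.
exact: (subge0 hF).
Qed.

Definition posp (x : R) := if 0 <= x then x else 0.
Lemma posp_ge0 x : 0 <= posp x. Proof. by rewrite /posp; case: ifP. Qed.
Lemma posp_ge x : x <= posp x.
Proof. by rewrite /posp; case: ifP => // /negbT; rewrite -ltNge => /ltW. Qed.
Lemma maxsq (x : R) : posp x ^+ 2 <= x ^+ 2.
Proof. by rewrite /posp; case: ifP => // _; rewrite expr0n /= sqr_ge0. Qed.

Lemma key : is_lub le (bp_set (2^-1 *: G a) (2^-1 *: G b)) (2^-1 *: G (a + b)).
Proof.
have h2 : (0 : R) <= 2^-1 by rewrite invr_ge0.
split.
  move=> w [th [hth ->]].
  rewrite !scalerA (mulrC (cos th)) (mulrC (sin th)) -!scalerA -scalerDr.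
  apply: (leZ hF h2).
  apply: (leT hF); last first.
    apply: (UB hF hu hgm ha hb (c := posp (cos th)) (d := posp (sin th))).
    - exact: posp_ge0.
    - exact: posp_ge0.
    - apply: le_trans (lerD (maxsq _) (maxsq _)) _.
      by rewrite cos2Dsin2.
  apply: (leD hF); apply: (leZl hF); rewrite ?posp_ge //.
    by apply: (G_ge0 hF hu hgm).
  by apply: (G_ge0 hF hu hgm).
move=> w hw.
have -> : w = 2^-1 *: (2 *: w) by rewrite scalerA mulVf ?scale1r.
apply: (leZ hF h2); apply: HD => p /andP [p0 p1].
set c := Num.sqrt (1 - p).
have hc : -1 <= c <= 1.
  apply/andP; split; first by apply: le_trans (sqrtr_ge0 _); rewrite lerN10.
  by rewrite -sqrtr1 ler_sqrt // ?lerBlDr ?lerDl // ?subr_ge0.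
have hmem : bp_set (2^-1 *: G a) (2^-1 *: G b)
    (cos (acos c) *: (2^-1 *: G a) + sin (acos c) *: (2^-1 *: G b)).
  exists (acos c); split => //.
  apply/andP; split; first exact: acos_ge0.
  apply: le_trans (acos_lepi hc) _.
  by have := @pi_ge0 R; lra.
have := hw _ hmem.
rewrite acosK; last by rewrite in_itv.
rewrite sin_acos // /c sqr_sqrtr ?subr_ge0 // opprB addrCA subrr addr0.
rewrite !scalerA (mulrC (Num.sqrt (1 - p))) (mulrC (Num.sqrt p)) -!scalerA -scalerDr.
move=> h.
have h2' : (0 : R) <= 2 by rewrite ler0n.
have := leZ hF h2' h.
by rewrite scalerA divff ?scale1r.
Qed.

End Key2.

Lemma boxplus_G (R : realType) (F : lmodType R) (le : F -> F -> Prop)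
  (hF : vector_lattice le) (hgm : geometric_mean_closed le) (u : F) (hu : le 0 u) (a b : F) :
  le 0 a -> le 0 b ->
  boxplus le (2^-1 *: G le u a) (2^-1 *: G le u b) = 2^-1 *: G le u (a + b).
Proof.
move=> ha hb.
have hk := key hF hu hgm ha hb.
apply: (lub_unique hF _ hk); rewrite /boxplus; apply: xgetPex; exists (2^-1 *: G le u (a + b)); exact: hk.
Qed.

Unset Implicit Arguments.
Local Open Scope ring_scope.

Theorem theorem3p8 (R : realType) (V F : lmodType R) (le : F -> F -> Prop)
  (hF : vector_lattice le) (hgm : geometric_mean_closed le)
  (T : V -> V -> F) (hT : vector_semi_inner_product le T)
  (u : F) (hu : le 0 u) (x y : V) :
  boxplus le (Tnorm le T u (x + y)) (Tnorm le T u (x - y)) =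
  Num.sqrt 2 *: boxplus le (Tnorm le T u x) (Tnorm le T u y).
Proof.
have TG : forall z, Tnorm le T u z = 2^-1 *: G le u (T z z) by move=> z; reflexivity.
rewrite !TG.
case: hT => hl [hr [_ hpos]].
rewrite !boxplus_G //.
have hDl : forall z w v, T (z + w) v = T z v + T w v.
  by move=> z w v; rewrite -[z in LHS](scale1r z) hl scale1r.
have hDr : forall z w v, T v (z + w) = T v z + T v w.
  by move=> z w v; rewrite -[z in LHS](scale1r z) hr scale1r.
have hBl : forall z w v, T (z - w) v = T z v - T w v.
  move=> z w v; have -> : z - w = (-1) *: w + z by rewrite scaleN1r addrC.
  by rewrite hl scaleN1r addrC.
have hBr : forall z w v, T v (z - w) = T v z - T v w.
  move=> z w v; have -> : z - w = (-1) *: w + z by rewrite scaleN1r addrC.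
  by rewrite hr scaleN1r addrC.
have e : T (x + y) (x + y) + T (x - y) (x - y) = Num.sqrt 2 ^+ 2 *: (T x x + T y y).
  rewrite sqr_sqrtr ?ler0n // hBl !hBr hDl !hDr.
  set A := T x x; set B := T x y; set C := T y x; set D := T y y.
  rewrite addrACA (addrACA A) subrr addr0 opprB (addrC D) (addrACA C) subrr add0r.
  by rewrite scalerDl scale1r -/(A + D) addrACA.
rewrite e G_scale //; first by rewrite !scalerA mulrC.
all: try by apply: le0D.
all: by rewrite sqrtr_gt0 ltr0n.
Qed.
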